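(* Let $\Delta:M_n\to M_n$ be a weak-2-local derivation, let $p_1,\ldots,p_n$ be mutually orthogonal minimal projections in $M_n$, and let $q=1-p_n$. Let $R\subseteq\{1,\ldots,n-1\}$ and set $r=\sum_{i\in R}p_i$ if $R\neq\emptyset$ and $r=0$ if $R=\emptyset$. Assume $\Delta(qaq+rap_n)=0$ for every $a\in M_n$. Then $\Delta(qaq+rap_n+\lambda e_{kn})=p_k\Delta(qaq+rap_n+\lambda e_{kn})p_n$ for every $a\in M_n$, $\lambda\in\mathbb{C}$ and $1\le k\le n-1$.
   Context: $M_n=M_n(\mathbb{C})$. For $i,j$, $e_{ij}$ is the unique minimal partial isometry in $M_n$ with $e_{ij}^*e_{ij}=p_j$ and $e_{ij}e_{ij}^*=p_i$. A derivation on $M_n$ is a linear map $D$ with $D(ab)=D(a)b+aD(b)$. A (not necessarily linear) map $\Delta:M_n\to M_n$ is a weak-2-local derivation if for every $a,b\in M_n$ and every $\phi\in M_n^*$ there exists a derivation $D_{a,b,\phi}$ such that $\phi\Delta(a)=\phi D_{a,b,\phi}(a)$ and $\phi\Delta(b)=\phi D_{a,b,\phi}(b)$. *)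

(* Defs.v *)
From HB Require Import structures.
From mathcomp Require Import all_boot all_order all_algebra.
From mathcomp Require Import complex.
From mathcomp Require Import reals.
Set Implicit Arguments. Unset Strict Implicit. Unset Printing Implicit Defensive.
Import Order.TTheory GRing.Theory Num.Theory.
Local Open Scope ring_scope.

Section Defs.
Variables (R : realType) (n : nat).
Local Notation C := (R[i]).
Local Notation M := ('M[C]_n.+1).

Definition adj (a : M) : M := (map_mx (@conjc R) a)^T.

Definition is_projection (p : M) : Prop := adj p = p /\ p * p = p.

Definition is_minimal_projection (p : M) : Prop :=
  is_projection p /\ p <> 0 /\
  forall q : M, is_projection q -> q * p = q -> q = 0 \/ q = p.

Definition is_linear_functional (phi : M -> C) : Prop :=
  forall (c : C) (x y : M), phi (c *: x + y) = c * phi x + phi y.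

Definition is_derivation (D : M -> M) : Prop :=
  (forall (c : C) (x y : M), D (c *: x + y) = c *: D x + D y) /\
  (forall x y : M, D (x * y) = D x * y + x * D y).

Definition weak_2_local_derivation (Delta : M -> M) : Prop :=
  forall (a b : M) (phi : M -> C), is_linear_functional phi ->
    exists D : M -> M, is_derivation D /\
      phi (Delta a) = phi (D a) /\ phi (Delta b) = phi (D b).
End Defs.

(* Main.v *)
From HB Require Import structures.
From mathcomp Require Import all_boot all_order all_algebra.
From mathcomp Require Import complex.
From mathcomp Require Import reals.
Require Import Defs.
Set Implicit Arguments. Unset Strict Implicit. Unset Printing Implicit Defensive.
Import Order.TTheory GRing.Theory Num.Theory.
Local Open Scope ring_scope.

Section H.
Variables (R : realType) (n : nat).
Local Notation C := (R[i]).
Local Notation M := ('M[C]_n.+1).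

Lemma tr_delta (A : M) i j : \tr (delta_mx j i * A) = A i j.
Proof.
rewrite /mxtrace (bigD1 j) //= big1 ?addr0.
  rewrite mxE (bigD1 i) //= big1 ?addr0; first by rewrite mxE !eqxx mul1r.
  by move=> k /negPf Hk; rewrite mxE Hk andbF mul0r.
move=> k /negPf Hk; rewrite mxE big1 // => l _.
rewrite mxE; case: eqP => [E|]; last by rewrite mul0r.
by move: Hk; rewrite E eqxx.
Qed.

Lemma tr_eq0 (A : M) : (forall g : M, \tr (g * A) = 0) -> A = 0.
Proof.
move=> H; apply/matrixP => i j; rewrite mxE -tr_delta; exact: H.
Qed.

Lemma der_add (D : M -> M) : is_derivation D -> forall x y, D (x + y) = D x + D y.
Proof. by case=> L _ x y; rewrite -{1}[x]scale1r L scale1r. Qed.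

Lemma der0 (D : M -> M) : is_derivation D -> D 0 = 0.
Proof.
move=> HD; have := der_add HD 0 0; rewrite addr0 => /eqP.
by rewrite -subr_eq subrr eq_sym => /eqP.
Qed.

Lemma derZ (D : M -> M) : is_derivation D -> forall c x, D (c *: x) = c *: D x.
Proof. by move=> HD c x; case: (HD) => L _; rewrite -[c *: x]addr0 L der0 // addr0. Qed.

Lemma derN (D : M -> M) : is_derivation D -> forall x, D (- x) = - D x.
Proof. by move=> HD x; rewrite -scaleN1r derZ // scaleN1r. Qed.

Lemma derB (D : M -> M) : is_derivation D -> forall x y, D (x - y) = D x - D y.
Proof. by move=> HD x y; rewrite der_add // derN. Qed.

Lemma zl (V : zmodType) (a b c d e f : V) : a + b - (c + d - (e + f)) = a - (c - e) + (b - (d - f)).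
Proof. by rewrite opprB opprD (addrACA e) (addrACA a) !opprB. Qed.

Local Notation E := (@delta_mx C n.+1 n.+1).

Lemma EE i j k l : E i j * E k l = E i l *+ (j == k).
Proof. by rewrite -mulmxE; apply: mul_delta_mx_cond. Qed.

Lemma inner (D : M -> M) : is_derivation D -> exists d : M, forall z, D z = d * z - z * d.
Proof.
move=> HD; have [_ Hl] := HD.
pose d : M := \sum_i D (E i 0) * E 0 i.
exists d.
have HE : forall j l, D (E j l) = d * E j l - E j l * d.
  move=> j l.
  have -> : d * E j l = D (E j 0) * E 0 l.
    rewrite /d mulr_suml (bigD1 j) //= big1 ?addr0.
      by rewrite -mulrA EE eqxx mulr1n.
    by move=> i /negPf Hi; rewrite -mulrA EE Hi mulr0n mulr0.
  have -> : E j l * d = D (E j 0) * E 0 l - D (E j l).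
    rewrite /d mulr_sumr.
    under eq_bigr => i _.
      rewrite mulrA.
      have -> : E j l * D (E i 0) = D (E j 0 *+ (l == i)) - D (E j l) * E i 0.
        by rewrite -EE Hl addrC addKr.
      rewrite mulrBl -mulrA EE eqxx mulr1n.
    over.
    rewrite sumrB -mulr_sumr -mx1_sum_delta mulr1.
    congr (_ - _).
    rewrite (bigD1 l) //= eqxx mulr1n big1 ?addr0 //.
    move=> i Hi; rewrite eq_sym (negPf Hi) mulr0n der0 // mul0r //.
  by rewrite opprB addrC subrK.
pose f z := D z - (d * z - z * d).
have fD : forall x y, f (x + y) = f x + f y.
  by move=> x y; rewrite /f der_add // mulrDr mulrDl zl.
have f0 : f 0 = 0 by rewrite /f der0 // mulr0 mul0r subrr subrr.
have fZ : forall c x, f (c *: x) = c *: f x.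
  by move=> c x; rewrite /f derZ // -scalerAr -scalerAl -!scalerBr.
have fsum : forall (I : finType) (F : I -> M), f (\sum_i F i) = \sum_i f (F i).
  move=> I F; elim/big_rec2: _; first by [].
  by move=> i y1 y2 _ <-; rewrite fD.
move=> z; apply/eqP; rewrite -subr_eq0; apply/eqP.
have -> : D z - (d * z - z * d) = f z by [].
transitivity (f (\sum_i \sum_j z i j *: E i j)); first by rewrite -matrix_sum_delta.
rewrite (fsum _ (fun i => \sum_j z i j *: E i j)); apply: big1 => i _.
rewrite (fsum _ (fun j => z i j *: E i j)); apply: big1 => j _.
by rewrite fZ /f HE subrr scaler0.
Qed.

Lemma trC (A B : M) : \tr (A * B) = \tr (B * A).
Proof. by rewrite -!mulmxE mxtrace_mulC. Qed.

Lemma trB (A B : M) : \tr (A - B) = \tr A - \tr B.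
Proof. exact: raddfB. Qed.

Lemma key (Delta : M -> M) : weak_2_local_derivation Delta ->
  forall s x h : M, Delta s = 0 -> (x - s) * h = h * (x - s) ->
  \tr (h * Delta x) = 0.
Proof.
move=> HW s x h Hs Hc.
have Hphi : is_linear_functional (fun z : M => \tr (h * z)).
  by move=> c u v; rewrite mulrDr -scalerAr mxtraceD mxtraceZ.
have [D [HD [E1 E2]]] := HW x s _ Hphi.
have [d Hd] := inner HD.
rewrite E1.
have -> : \tr (h * D x) = \tr (h * D x) - \tr (h * D s).
  by rewrite -E2 Hs mulr0 mxtrace0 subr0.
rewrite -trB -mulrBr -derB // Hd mulrBr trB.
by rewrite mulrA (trC (h * d)) (mulrA (x - s)) Hc -mulrA subrr.
Qed.

Lemma adjM (A B : M) : adj (A * B) = adj B * adj A.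
Proof. by rewrite /adj -!mulmxE map_mxM trmx_mul. Qed.

Lemma adjK (A : M) : adj (adj A) = A.
Proof. by apply/matrixP => i j; rewrite !mxE conjcK. Qed.

Lemma adjB (A B : M) : adj (A - B) = adj A - adj B.
Proof. by apply/matrixP => i j; rewrite !mxE rmorphB. Qed.

Lemma adj_eq0 (z : M) : adj z * z = 0 -> z = 0.
Proof.
move=> H; apply/matrixP => i j; rewrite mxE.
have : (adj z * z) j j = 0 by rewrite H mxE.
rewrite -mulmxE mxE.
have Hn : forall k, adj z j k * z k j = `|z k j| ^+ 2.
  by move=> k; rewrite !mxE sqr_normc mulrC.
under eq_bigr => k _ do rewrite Hn.
move/psumr_eq0P => H0.
have := H0 (fun k _ => exprn_ge0 2 (normr_ge0 _)) i isT => /eqP; rewrite expf_eq0 /=.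
by rewrite normr_eq0 => /eqP.
Qed.

Lemma lx (A B C0 : M) : A * B = C0 -> forall Y, A * (B * Y) = C0 * Y.
Proof. by move=> H Y; rewrite mulrA H. Qed.

Lemma zx (A B : M) : A * B = 0 -> forall Y, A * (B * Y) = 0.
Proof. by move=> H Y; rewrite mulrA H mul0r. Qed.
Lemma piso (f Q : M) : adj Q = Q -> Q * Q = Q -> adj f * f = Q -> f * Q = f.
Proof.
move=> aQ QQ H.
apply/eqP; rewrite -subr_eq0; apply/eqP; apply: adj_eq0.
rewrite adjB adjM aQ mulrBl !mulrBr -!mulrA (lx H) mulrA H !QQ.
by rewrite -mulrA H QQ !subrr.
Qed.
Lemma trcyc (U g V Y : M) : \tr (g * (V * Y * U)) = \tr (U * g * V * Y).
Proof. by rewrite -!mulrA [in RHS]trC -!mulrA. Qed.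
End H.

Ltac simp rules := repeat progress (rewrite ?(mulrDl, mulrDr, mulrBl, mulrBr, mul1r, mulr1, mul0r, mulr0) -?mulrA -?scalerAl -?scalerAr ?rules ?(scaler0, scale0r, addr0, add0r, subr0, sub0r, oppr0, subrr, mulrN, mulNr, scalerN, opprK)).

Section Abs.
Variables (F : comNzRingType) (A : algType F).
Variables (P K Q q K' e ea : A) (lambda : F).
Hypotheses (PP : P * P = P) (KK : K * K = K) (KP : K * P = 0) (PK : P * K = 0)
  (eP : e * P = e) (Ke : K * e = e) (Pe : P * e = 0) (eK : e * K = 0) (ee : e * e = 0)
  (QP : Q * P = 0) (PQ : P * Q = 0) (QK : Q * K = 0) (KQ : K * Q = 0) (QQ : Q * Q = Q)
  (eQ : e * Q = 0) (Qe : Q * e = 0) (He1 : ea * e = P) (He2 : e * ea = K)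
  (qe : q * e = e) (eq' : e * q = 0) (qK : q * K = K) (Kq : K * q = K)
  (qQ : q * Q = Q) (Qq : Q * q = Q) (qP : q * P = 0) (Pq : P * q = 0) (K'e : K' * e = 0).

Lemma lx' (a b c : A) : a * b = c -> forall Y, a * (b * Y) = c * Y.
Proof. by move=> H Y; rewrite mulrA H. Qed.
Lemma zx' (a b : A) : a * b = 0 -> forall Y, a * (b * Y) = 0.
Proof. by move=> H Y; rewrite mulrA H mul0r. Qed.

Let rules := (PP, lx' PP, KK, lx' KK, KP, zx' KP, PK, zx' PK, eP, lx' eP, Ke, lx' Ke,
  Pe, zx' Pe, eK, zx' eK, ee, zx' ee, QP, zx' QP, PQ, zx' PQ, QK, zx' QK, KQ, zx' KQ,
  QQ, lx' QQ, eQ, zx' eQ, Qe, zx' Qe, He1, lx' He1, He2, lx' He2,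
  (qe, lx' qe, eq', zx' eq', qK, lx' qK, Kq, lx' Kq, qQ, lx' qQ, Qq, lx' Qq,
  qP, zx' qP, Pq, zx' Pq, K'e, zx' K'e)).

Lemma c1 g : (lambda *: e + 0) * (q * g * K') = (q * g * K') * (lambda *: e + 0).
Proof. by simp rules. Qed.
Lemma m2a g0 : q * (e * (P * (g0 * Q))) * q = e * (P * (g0 * Q)).
Proof. by simp rules. Qed.
Lemma m2b g0 : e * (P * (g0 * Q)) * P = 0.
Proof. by simp rules. Qed.
Lemma c2 g0 : (lambda *: e + e * (P * (g0 * Q))) * (P * (g0 * Q) - lambda *: Q)
  = (P * (g0 * Q) - lambda *: Q) * (lambda *: e + e * (P * (g0 * Q))).
Proof. by simp rules. Qed.
Lemma m3a : q * K * q = K.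
Proof. by simp rules. Qed.
Lemma c3 g : (lambda *: e + K) * (P * (g * P) - lambda *: (e * (g * P)))
  = (P * (g * P) - lambda *: (e * (g * P))) * (lambda *: e + K).
Proof. by simp rules. Qed.
Lemma c4 g : (lambda *: e + 0) * (K * (g * K) + ea * (K * (g * (K * e))))
  = (K * (g * K) + ea * (K * (g * (K * e)))) * (lambda *: e + 0).
Proof. by simp rules. Qed.
Lemma m5a g : q * (Q * (g * K)) * q = Q * (g * K).
Proof. by simp rules. Qed.
Lemma m5b g : Q * (g * K) * P = 0.
Proof. by simp rules. Qed.

Lemma fin (X : A) : K + P + Q = 1 ->
  K * (X * K) = 0 -> K * (X * Q) = 0 -> P * (X * K) = 0 -> P * (X * P) = 0 ->
  P * (X * Q) = 0 -> Q * (X * K) = 0 -> Q * (X * P) = 0 -> Q * (X * Q) = 0 ->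
  X = K * X * P.
Proof.
move=> E1 h1 h2 h3 h4 h5 h6 h7 h8.
transitivity ((K + P + Q) * X * (K + P + Q)); first by rewrite E1 mul1r mulr1.
rewrite !mulrDl !mulrDr -!mulrA h1 h2 h3 h4 h5 h6 h7 h8.
by rewrite !addr0 !add0r.
Qed.
End Abs.


Theorem lemma2p4 (R : realType) (n : nat)
  (Delta : 'M[R[i]]_n.+1 -> 'M[R[i]]_n.+1)
  (p : 'I_n.+1 -> 'M[R[i]]_n.+1)
  (R0 : {set 'I_n.+1}) :
  weak_2_local_derivation Delta ->
  (forall i, is_minimal_projection (p i)) ->
  (forall i j, i != j -> p i * p j = 0) ->
  ord_max \notin R0 ->
  let q := 1 - p ord_max in
  let r := \sum_(i in R0) p i in
  (forall a : 'M[R[i]]_n.+1, Delta (q * a * q + r * a * p ord_max) = 0) ->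
  forall (a : 'M[R[i]]_n.+1) (lambda : R[i]) (k : 'I_n.+1)
         (e : 'M[R[i]]_n.+1),
    k != ord_max ->
    adj e * e = p ord_max -> e * adj e = p k ->
    Delta (q * a * q + r * a * p ord_max + lambda *: e)
    = p k * Delta (q * a * q + r * a * p ord_max + lambda *: e) * p ord_max.
Proof.
move=> HW Hmin Horth HR q r HS a lambda k e Hk He1 He2.
set P := p ord_max in q HS He1 *; set K := p k in He2 *.
have aP : adj P = P by have [[]] := Hmin ord_max.
have PP : P * P = P by have [[]] := Hmin ord_max.
have aK : adj K = K by have [[]] := Hmin k.
have KK : K * K = K by have [[]] := Hmin k.
have KP : K * P = 0 := Horth _ _ Hk.
have PK : P * K = 0 by apply: Horth; rewrite eq_sym.
have eP : e * P = e by apply: piso.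
have Ke : K * e = e.
  have H1 : adj e * K = adj e by apply: piso; rewrite // adjK.
  by rewrite -[in RHS](adjK e) -H1 adjM adjK aK.
have Pe : P * e = 0 by rewrite -Ke mulrA PK mul0r.
have eK : e * K = 0 by rewrite -eP -mulrA PK mulr0.
have ee : e * e = 0 by rewrite -{1}eP -mulrA Pe mulr0.
pose Q := 1 - K - P.
have QP : Q * P = 0 by rewrite /Q !mulrBl mul1r KP PP subr0 subrr.
have PQ : P * Q = 0 by rewrite /Q !mulrBr mulr1 PK PP subr0 subrr.
have QK : Q * K = 0 by rewrite /Q !mulrBl mul1r KK PK subrr subr0.
have KQ : K * Q = 0 by rewrite /Q !mulrBr mulr1 KK KP subrr subr0.
have QQ : Q * Q = Q by rewrite {2}/Q !mulrBr mulr1 QK QP !subr0.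
have eQ : e * Q = 0 by rewrite /Q !mulrBr mulr1 eK eP subr0 subrr.
have Qe : Q * e = 0 by rewrite /Q !mulrBl mul1r Ke Pe subrr subr0.
have aeP : P * adj e = adj e by rewrite -{2}eP adjM aP.
have qe : q * e = e by rewrite /q mulrBl mul1r Pe subr0.
have eq' : e * q = 0 by rewrite /q mulrBr mulr1 eP subrr.
have qK : q * K = K by rewrite /q mulrBl mul1r PK subr0.
have Kq : K * q = K by rewrite /q mulrBr mulr1 KP subr0.
have qQ : q * Q = Q by rewrite /q mulrBl mul1r PQ subr0.
have Qq : Q * q = Q by rewrite /q mulrBr mulr1 QP subr0.
have qP : q * P = 0 by rewrite /q mulrBl mul1r PP subrr.
have Pq : P * q = 0 by rewrite /q mulrBr mulr1 PP subrr.
pose K' := 1 - K.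
have K'e : K' * e = 0 by rewrite /K' mulrBl mul1r Ke subrr.
have PK' : P * K' = P by rewrite /K' mulrBr mulr1 PK subr0.
have QK' : Q * K' = Q by rewrite /K' mulrBr mulr1 QK subr0.
have E1 : K + P + Q = 1.
  by rewrite /Q addrC !addrA (addrAC (1 - K)) subrK subrK.
set X := Delta _.
clearbody q K' Q.
have KEY : forall t h : 'M[R[i]]_n.+1, q * t * q = t -> t * P = 0 ->
    (lambda *: e + t) * h = h * (lambda *: e + t) -> \tr (h * X) = 0.
  move=> t h Ht1 Ht2 Hc; apply: (key HW (s := q * a * q + r * a * P - t)).
    have := HS (a - t).
    rewrite [q * (a - t)]mulrBr [(q * a - q * t) * q]mulrBl Ht1 [r * (a - t)]mulrBr [(r * a - r * t) * P]mulrBl -(mulrA r t) Ht2 mulr0 subr0.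
    by rewrite addrAC.
  have -> : q * a * q + r * a * P + lambda *: e - (q * a * q + r * a * P - t)
      = lambda *: e + t.
    by rewrite opprB addrCA (addrAC (q * a * q + r * a * P)) subrr add0r addrC.
  exact: Hc.
have B1 : K' * X * q = 0.
  apply: tr_eq0 => g.
  have H := KEY 0 (q * g * K') ltac:(by rewrite mulr0 mul0r) (mul0r _)
    ltac:(by apply: c1).
  by rewrite trcyc.
have UXV : forall U V : 'M[R[i]]_n.+1, U * K' = U -> q * V = V -> U * (X * V) = 0.
  move=> U V HU HV; rewrite -HU -HV.
  have -> : U * K' * (X * (q * V)) = U * (K' * X * q) * V by rewrite !mulrA.
  by rewrite B1 mulr0 mul0r.
have PXK : P * (X * K) = 0 by apply: UXV.
have PXQ : P * (X * Q) = 0 by apply: UXV.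
have QXK : Q * (X * K) = 0 by apply: UXV.
have QXQ : Q * (X * Q) = 0 by apply: UXV.
have B2 : Q * (X * P) = 0.
  apply: tr_eq0 => g0; rewrite (mulrA Q X P) trcyc.
  have H := KEY (e * (P * (g0 * Q))) (P * (g0 * Q) - lambda *: Q) ltac:(by apply: m2a)
    ltac:(by apply: m2b) ltac:(by apply: c2).
  move: H; rewrite mulrBl trB -scalerAl mxtraceZ.
  have -> : \tr (Q * X) = 0 by rewrite -QQ -mulrA trC -mulrA QXQ mxtrace0.
  by rewrite mulr0 subr0 !mulrA.
have B3 : P * (X * P) = 0.
  apply: tr_eq0 => g; rewrite (mulrA P X P) trcyc.
  have H := KEY K (P * (g * P) - lambda *: (e * (g * P))) ltac:(by apply: m3a)
    KP ltac:(by apply: c3).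
  move: H; rewrite mulrBl trB -scalerAl mxtraceZ.
  have -> : \tr (e * (g * P) * X) = 0.
    by rewrite -Ke -!mulrA trC -!mulrA PXK !mulr0 mxtrace0.
  by rewrite mulr0 subr0 !mulrA.
have B4 : K * (X * K) = 0.
  apply: tr_eq0 => g; rewrite (mulrA K X K) trcyc.
  have H := KEY 0 (K * (g * K) + adj e * (K * (g * (K * e)))) ltac:(by rewrite mulr0 mul0r)
    (mul0r _) ltac:(by apply: c4).
  move: H; rewrite mulrDl mxtraceD.
  have -> : \tr (adj e * (K * (g * (K * e))) * X) = 0.
    rewrite -aeP -!mulrA trC -!mulrA -(lx eP (X * P)) B3.
    by rewrite !mulr0 mxtrace0.
  by rewrite addr0 !mulrA.
have B5 : K * (X * Q) = 0.
  apply: tr_eq0 => g; rewrite (mulrA K X Q) trcyc.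
  have H := KEY (Q * (g * K)) (Q * (g * K) + lambda *: e) ltac:(by apply: m5a)
    ltac:(by apply: m5b) ltac:(by rewrite (addrC (Q * (g * K)))).
  move: H; rewrite mulrDl mxtraceD -scalerAl mxtraceZ.
  have -> : \tr (e * X) = 0.
    by rewrite -(lx Ke) trC -mulrA -(lx eP (X * K)) PXK mulr0 mxtrace0.
  by rewrite mulr0 addr0 !mulrA.
exact: (fin E1 B4 B5 PXK B3 PXQ QXK B2 QXQ).
Qed.
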